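(* Let $p>2$ be a prime, $K\in\{\mathbb Z_{(p)},\mathbb Z_p\}$, $F$ a field containing $K$, $G=\langle a\rangle\cong C_{p^2}$, $\Phi(x)=x^{p-1}+\dots+x+1$, and for $1\leq j\leq p-2$ let $U_j$ be the $KC_{p^2}$-submodule of $(KC_{p^2})^{2}$ generated by $\big((a-1)^{j+1}+\Phi(a),\,(a-1)^j\big)$ and $\big((a-1)\Phi(a^p),\,\Phi(a^p)\big)$. Let $f_j:C_{p^2}\to\widehat{U_j}$ be the cocycle with $f_j(a)=p^{-2}\Phi(a)\Phi(a^p)(1,0)+U_j$. Then $\mathrm{Crys}(C_{p^2};U_j;f_j)$ is torsion-free.
   Context: $FM=F\otimes_KM$, $\widehat M=FM/M$ with $g(x+M)=gx+M$; a $1$-cocycle is $T:G\to\widehat M$ with $T(gh)=gT(h)+T(g)$, determined for cyclic $G$ by $T(a)$ via $T(a^k)=(1+a+\dots+a^{k-1})T(a)$. $\mathrm{Crys}(G;M;T)=\{(g,x):g\in G,\ x\in FM,\ x+M=T(g)\}$ with $(g,x)(g',x')=(gg',g'x+x')$. *)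

(* Defs.v *)
From HB Require Import structures.
From mathcomp Require Import all_boot all_order all_algebra.
Set Implicit Arguments. Unset Strict Implicit. Unset Printing Implicit Defensive.
Import Order.TTheory GRing.Theory Num.Theory.
Local Open Scope ring_scope.

Definition is_Zloc (F : fieldType) (p : nat) (K : {pred F}) : Prop :=
  forall x : F, x \in K <-> exists q : rat, ~~ (p %| `|denq q|)%N /\ x = ratr q.

Definition pdivK (F : fieldType) (p : nat) (K : {pred F}) (n : nat) (x : F) : Prop :=
  exists2 y : F, y \in K & x = (p%:R ^+ n) * y.

(* K is a copy of the p-adic integers Z_p inside F: a subring with residue
   ring Z/p (p not a unit, every element congruent to an integer mod p) that is
   p-adically separated and complete.  These properties characterise Z_p up
   to isomorphism. *)
Definition is_Zp (F : fieldType) (p : nat) (K : {pred F}) : Prop :=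
  [/\ 1 \in K, (forall x y, x \in K -> y \in K -> x - y \in K),
      (forall x y, x \in K -> y \in K -> x * y \in K) &
      (p%:R)^-1 \notin K] /\
  [/\
      (forall x, x \in K -> exists z : int, pdivK p K 1 (x - z%:~R)),
      (forall x, x \in K -> (forall n, pdivK p K n x) -> x = 0) &
      (forall s : nat -> F, (forall n, s n \in K) ->
         (forall n, pdivK p K n (s n.+1 - s n)) ->
         exists2 l, l \in K & forall n, pdivK p K n (l - s n))].

(* ---------- the group algebra F C_{p^2} = F[X]/(X^{p^2} - 1) ----------
   An element of F C_{p^2} is represented by its reduced polynomial
   (size < p^2), the generator a being X. Pairs represent (FG)^2. *)

Definition modp2 (F : fieldType) (p : nat) : {poly F} := 'X^(p ^ 2) - 1.
Definition red (F : fieldType) (p : nat) (u : {poly F}) : {poly F} := u %% modp2 F p.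
Definition reduced (F : fieldType) (p : nat) (u : {poly F}) : bool :=
  (size u < p ^ 2)%N.

Definition PhiA (F : fieldType) (p : nat) : {poly F} := \sum_(i < p) 'X^i.
Definition PhiAp (F : fieldType) (p : nat) : {poly F} := \sum_(i < p) 'X^(p * i).

Definition gen1 (F : fieldType) (p j : nat) : {poly F} * {poly F} :=
  (('X - 1) ^+ j.+1 + PhiA F p, ('X - 1) ^+ j).
Definition gen2 (F : fieldType) (p : nat) : {poly F} * {poly F} :=
  (('X - 1) * PhiAp F p, PhiAp F p).

(* x lies in the S[G]-submodule of (FG)^2 generated by gen1, gen2, where
   S is K (giving U_j) or all of F (giving F U_j = F (x)_K U_j). *)
Definition in_span (F : fieldType) (p j : nat) (S : {pred F})
    (x : {poly F} * {poly F}) : Prop :=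
  exists c1 c2 : {poly F}, [/\ c1 \is a polyOver S, c2 \is a polyOver S,
    red p x.1 = red p (c1 * (gen1 F p j).1 + c2 * (gen2 F p).1) &
    red p x.2 = red p (c1 * (gen1 F p j).2 + c2 * (gen2 F p).2)].

Definition inU (F : fieldType) (p j : nat) (K : {pred F}) x := in_span p j K x.
Definition inFU (F : fieldType) (p j : nat) x := in_span p j (@predT F) x.

Definition wj (F : fieldType) (p : nat) : {poly F} * {poly F} :=
  ((p%:R ^+ 2)^-1 *: (PhiA F p * PhiAp F p), 0).

(* 1 + a + ... + a^{k-1}, so that f_j(a^k) = N_k f_j(a) *)
Definition Nk (F : fieldType) (k : nat) : {poly F} := \sum_(i < k) 'X^i.

Definition pmul (F : fieldType) (c : {poly F}) (x : {poly F} * {poly F}) :=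
  (c * x.1, c * x.2).

(* Crys(C_{p^2}; U_j; f_j): elements (a^k, x), 0 <= k < p^2, x in F U_j
   (reduced), with x + U_j = f_j(a^k). *)
Definition inCrys (F : fieldType) (p j : nat) (K : {pred F})
    (e : nat * ({poly F} * {poly F})) : Prop :=
  [/\ (e.1 < p ^ 2)%N, reduced p e.2.1, reduced p e.2.2,
      inFU p j e.2 &
      inU p j K (e.2 - pmul (Nk F e.1) (wj F p))].

(* the group law (g,x)(g',x') = (g g', g' x + x') on C_{p^2} x (FG)^2 *)
Definition cmul (F : fieldType) (p : nat) (e e' : nat * ({poly F} * {poly F})) :
    nat * ({poly F} * {poly F}) :=
  (((e.1 + e'.1) %% p ^ 2)%N,
   (red p ('X^(e'.1) * e.2.1 + e'.2.1), red p ('X^(e'.1) * e.2.2 + e'.2.2))).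

Definition cone (F : fieldType) : nat * ({poly F} * {poly F}) := (0%N, (0, 0)).

Definition cpow (F : fieldType) (p : nat) (e : nat * ({poly F} * {poly F})) (n : nat) :=
  iter n (fun y => cmul p y e) (cone F).

Definition crys_torsion_free (F : fieldType) (p j : nat) (K : {pred F}) : Prop :=
  forall e, inCrys p j K e -> forall n : nat, (0 < n)%N -> cpow p e n = cone F ->
    e = cone F.

(* Main.v *)
Require Import Defs.
From HB Require Import structures.
From mathcomp Require Import all_boot all_order all_algebra.
From mathcomp Require Import ring.
Import Order.TTheory GRing.Theory Num.Theory.
Set Implicit Arguments. Unset Strict Implicit. Unset Printing Implicit Defensive.
Local Open Scope ring_scope.

Definition KS (F : fieldType) (K : {pred F}) (H : GRing.subring_closed K) : {pred F} := K.
Definition KS_closed (F : fieldType) (K : {pred F}) (H : GRing.subring_closed K) :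
  GRing.subring_closed (KS H) := H.
HB.instance Definition _ (F : fieldType) (K : {pred F}) (H : GRing.subring_closed K) :=
  @GRing.isSubringClosed.Build F (@KS F K H) (KS_closed H).

Definition Kgood (F : fieldType) (p : nat) (K : {pred F}) :=
  GRing.subring_closed K /\ (forall m : nat, ~~ (p %| m)%N -> m%:R / p%:R \notin K).

Lemma char0_nat (F : fieldType) (n : nat) : [pchar F] =i pred0 -> (n%:R == 0 :> F) = (n == 0%N).
Proof. by move=> h; have /pcharf0P := h; apply. Qed.

Lemma char0_int (F : fieldType) (z : int) : [pchar F] =i pred0 -> (z%:~R == 0 :> F) = (z == 0).
Proof.
move=> h; case: z => n.
  by rewrite -pmulrn char0_nat.
by rewrite NegzE intrN oppr_eq0 -pmulrn char0_nat.
Qed.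
Lemma Zp_good (F : fieldType) (p : nat) (K : {pred F}) :
  prime p -> [pchar F] =i pred0 -> is_Zp p K -> Kgood p K.
Proof.
move=> pr ch [[K1 KB KM Kinv] _].
have Hs : GRing.subring_closed K by split.
split=> // m pm; apply/negP => Hm.
have p0 : (p%:R : F) != 0 by rewrite char0_nat // -lt0n prime_gt0.
have cop : coprime m p by rewrite coprime_sym prime_coprime.
have [u [v Huv]] := Bezoutz m p.
have g1 : gcdz m p = 1 by rewrite /gcdz /= (eqP cop).
rewrite g1 in Huv.
have : (m%:R / p%:R) * u%:~R + v%:~R \in KS Hs.
  apply: rpredD; last exact: rpred_int.
  by apply: rpredM; [exact: Hm | exact: rpred_int].
suff -> : (m%:R / p%:R) * u%:~R + v%:~R = (p%:R : F)^-1 by move=> /= H; rewrite H in Kinv.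
apply: (mulfI p0); rewrite mulrDr divff // mulrA mulrCA divff // mulr1.
have := congr1 (fun z : int => z%:~R : F) Huv; rewrite intrD !intrM /=.
by rewrite -!pmulrn mulrC (mulrC _ (v%:~R)) => ->.
Qed.
Lemma Zloc_mem (F : fieldType) (p : nat) (K : {pred F}) :
  prime p -> [pchar F] =i pred0 -> is_Zloc p K ->
  forall (x : F) (a d : int), ~~ (p %| `|d|)%N -> x * d%:~R = a%:~R -> x \in K.
Proof.
move=> pr ch HK x a d pd; rewrite /is_Zloc in HK.
have d0 : d != 0 by apply: contraNneq pd => ->; rewrite dvdn0.
move=> E; apply: (proj2 (HK x)).
case: (divqP a d) pd d0 E => [//|k r k0].
move=> pd _ E.
have kd : (k%:~R : F) != 0 by rewrite char0_int.
have dd : ((denq r)%:~R : F) != 0 by rewrite char0_int // denq_neq0.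
exists r; split.
  by apply: contra pd; rewrite abszM; exact: dvdn_mull.
rewrite /ratr; apply: (mulIf dd); rewrite divfK //.
apply: (mulfI kd); rewrite -!intrM -E intrM; ring.
Qed.

Lemma Zloc_good (F : fieldType) (p : nat) (K : {pred F}) :
  prime p -> [pchar F] =i pred0 -> is_Zloc p K -> Kgood p K.
Proof.
move=> pr ch HK; have HK2 := HK; rewrite /is_Zloc in HK2.
have Hin : forall x, x \in K -> exists a d : int, ~~ (p %| `|d|)%N /\ x * d%:~R = a%:~R.
  move=> x /(proj1 (HK2 x)) [q [pq ->]]; exists (numq q), (denq q); split => //.
  by rewrite /ratr divfK // char0_int // denq_neq0.
split; first split.
- apply: (Zloc_mem pr ch HK (a:=1) (d:=1)); last by rewrite mulr1.
  by rewrite /= dvdn1; apply/negP => /eqP H; move: (prime_gt1 pr); rewrite H.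
- move=> x y /Hin [a1 [d1 [p1 E1]]] /Hin [a2 [d2 [p2 E2]]].
  apply: (Zloc_mem pr ch HK (a := a1 * d2 - a2 * d1) (d := d1 * d2)).
    by rewrite abszM Euclid_dvdM // negb_or p1.
  by rewrite intrB !intrM -E1 -E2; ring.
- move=> x y /Hin [a1 [d1 [p1 E1]]] /Hin [a2 [d2 [p2 E2]]].
  apply: (Zloc_mem pr ch HK (a := a1 * a2) (d := d1 * d2)).
    by rewrite abszM Euclid_dvdM // negb_or p1.
  by rewrite !intrM -E1 -E2; ring.
move=> m pm; apply/negP => /Hin [a [d [pd E]]].
have p0 : (p%:R : F) != 0 by rewrite char0_nat // -lt0n prime_gt0.
have : ((m%:Z * d - a * p%:Z)%:~R : F) == 0.
  rewrite intrB !intrM -E -!pmulrn; apply/eqP; field; exact: p0.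
rewrite char0_int // subr_eq0 => /eqP /(congr1 absz); rewrite !abszM /= => Hm.
have : (p %| m * `|d|)%N by rewrite Hm dvdn_mull.
by rewrite Euclid_dvdM // (negbTE pm) (negbTE pd).
Qed.
Lemma dvd_Xp (F : fieldType) (p m : nat) : ('X^p - 1 : {poly F}) %| 'X^(p * m) - 1.
Proof. by rewrite exprM (subrX1 ('X^p)) dvdp_mulIl. Qed.

Lemma dvd_M (F : fieldType) (p : nat) : ('X^p - 1 : {poly F}) %| modp2 F p.
Proof. by rewrite /modp2 -mulnn dvd_Xp. Qed.

Lemma red_eq_dvd (F : fieldType) (p : nat) (a b : {poly F}) :
  red p a = red p b -> modp2 F p %| a - b.
Proof. by rewrite /red => E; apply/modp_eq0P; rewrite modpD modpN E subrr. Qed.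

Lemma dvd_eval1 (F : fieldType) (p : nat) (f : {poly F}) : modp2 F p %| f -> f.[1] = 0.
Proof.
move=> /divpK <-; rewrite hornerM /modp2 hornerD hornerN hornerXn expr1n hornerC.
by rewrite subrr mulr0.
Qed.

Definition Sk (F : fieldType) (k m : nat) : {poly F} := iter m (fun s => 'X^k * s + 1) 0.

Lemma cpow_eq (F : fieldType) (p k : nat) (x : {poly F} * {poly F}) (m : nat) :
  cpow p (k, x) m = ((m * k) %% p ^ 2, (red p (Sk F k m * x.1), red p (Sk F k m * x.2)))%N.
Proof.
elim: m => [|m IH]; first by rewrite /cpow /= /red !mul0r mod0p mod0n.
rewrite /cpow iterS -/(cpow p (k,x) m) IH /cmul /=.
congr (_, (_, _)); first by rewrite modnDml mulSn addnC.
  by rewrite /red modpD modp_mul -modpD mulrDl mul1r mulrA.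
by rewrite /red modpD modp_mul -modpD mulrDl mul1r mulrA.
Qed.

Lemma Sk_eval (F : fieldType) (k m : nat) : (Sk F k m).[1] = m%:R.
Proof.
elim: m => [|m IH]; first by rewrite /Sk /= horner0.
rewrite /Sk iterS -/(Sk F k m) hornerD hornerM IH hornerXn expr1n mul1r hornerC.
by rewrite -natr1.
Qed.

Lemma Sk0 (F : fieldType) (m : nat) : Sk F 0 m = m%:R.
Proof.
elim: m => [|m IH]; first by [].
by rewrite /Sk iterS -/(Sk F 0 m) IH expr0 mul1r natr1.
Qed.

Lemma Sk_dvd (F : fieldType) (p u m : nat) : ('X^p - 1 : {poly F}) %| Sk F (p * u) m - m%:R.
Proof.
elim: m => [|m IH]; first by rewrite /Sk /= subrr dvdp0.
have -> : Sk F (p * u) m.+1 - m.+1%:R =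
   'X^(p * u) * (Sk F (p * u) m - m%:R) + ('X^(p * u) - 1) * m%:R.
  by rewrite /Sk iterS -/(Sk F (p * u) m) -natr1; ring.
by apply: dvdp_add; [exact: dvdp_mull | exact/dvdp_mulr/dvd_Xp].
Qed.

Lemma sumX_eval (F : fieldType) (n : nat) (f : nat -> nat) :
  (\sum_(i < n) ('X^(f i) : {poly F})).[1] = n%:R.
Proof.
rewrite horner_sum; under eq_bigr do rewrite hornerXn expr1n.
by rewrite sumr_const card_ord.
Qed.

Lemma PhiAp_dvd (F : fieldType) (p : nat) : ('X^p - 1 : {poly F}) %| PhiAp F p - p%:R.
Proof.
rewrite /PhiAp.
have -> : (p%:R : {poly F}) = \sum_(i < p) 1 by rewrite sumr_const card_ord.
rewrite -sumrB; apply: (big_ind (fun q : {poly F} => ('X^p - 1) %| q)) => //.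
  by move=> a b; apply: dvdp_add.
by move=> i _; apply: dvd_Xp.
Qed.

Lemma quot_over (F : fieldType) (K : {pred F}) (H : GRing.subring_closed K) (p : nat)
  (g h : {poly F}) : (0 < p)%N -> h \is a polyOver (KS H) -> h = g * ('X^p - 1) ->
  g \is a polyOver (KS H).
Proof.
move=> p0 hK E; apply/polyOverP => i; elim/ltn_ind: i => i IH.
have -> : g`_i = (g * 'X^p)`_i - h`_i.
  by rewrite E mulrBr mulr1 coefB opprB addrC subrK.
rewrite coefMXn; case: ifP => [_|/negbT].
  by rewrite rpredB ?rpred0 //; exact: (polyOverP hK).
rewrite -leqNgt => pi; rewrite rpredB //; last exact: (polyOverP hK).
apply: IH; rewrite ltn_subrL p0 /=; exact: leq_trans p0 pi.
Qed.

Lemma coef_X1n (F : fieldType) (n i : nat) : (('X + 1 : {poly F}) ^+ n)`_i = ('C(n, i))%:R.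
Proof.
elim: n i => [|n IH] i; first by rewrite expr0 coef1 bin0n.
rewrite exprSr mulrDr mulr1 coefD coefMX.
case: i => [|i] /=; rewrite !IH ?add0r ?bin0 //.
by rewrite binS natrD addrC.
Qed.

Definition rpoly (F : fieldType) (p : nat) : {poly F} := \poly_(i < p) (('C(p, i) %/ p)%:R).

Lemma X1p (F : fieldType) (p : nat) : prime p ->
  ('X + 1 : {poly F}) ^+ p - 1 = 'X^p + rpoly F p *+ p.
Proof.
move=> pr; have p1 := prime_gt1 pr.
apply/polyP => i; rewrite coefB coef_X1n coefD coefXn coefMn coef_poly coef1.
case: (ltngtP i p) => [ltip|gtip|->].
- case: i ltip => [|i] ltip.
    by rewrite bin0 /= divn_small // subrr mul0rn addr0.
  rewrite /= mulr0n subr0 add0r -mulrnA divnK //.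
  by apply: prime_dvd_bin => //; rewrite ltip.
- rewrite bin_small // (_ : (i == 0)%N = false) ?mulr0n ?subr0 ?mul0rn ?addr0 //.
  by case: i gtip.
- by rewrite binn (_ : (p == 0)%N = false) ?mulr0n ?subr0 ?mul0rn ?addr0 //; case: p pr {p1}.
Qed.

Lemma comp_exp (F : fieldType) (q r : {poly F}) (m : nat) : (q ^+ m) \Po r = (q \Po r) ^+ m.
Proof.
elim: m => [|m IH]; first by rewrite !expr0 -polyC1 comp_polyC.
by rewrite !exprS comp_polyM IH.
Qed.

Lemma comp_nat (F : fieldType) (q : {poly F}) (m : nat) : (m%:R : {poly F}) \Po q = m%:R.
Proof. by rewrite -polyC_natr comp_polyC. Qed.
Lemma main_good (F : fieldType) (p : nat) (K : {pred F}) (j : nat) :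
  prime p -> [pchar F] =i pred0 -> Kgood p K -> (j <= p - 2)%N ->
  crys_torsion_free p j K.
Proof.
move=> pr ch [Hs Knot] jp [k [x1 x2]] [/= kp r1 r2 _ [c1 [c2 [hc1 hc2 E1 E2]]]] n n0.
rewrite cpow_eq /cone /= => -[_ Hs1 Hs2].
have hc1' : c1 \is a polyOver (KS Hs) := hc1.
have hc2' : c2 \is a polyOver (KS Hs) := hc2.
have p0 : (p%:R : F) != 0 by rewrite char0_nat // -lt0n prime_gt0.
have nF : (n%:R : F) != 0 by rewrite char0_nat // -lt0n.
have D1 : modp2 F p %| Sk F k n * x1 by apply/modp_eq0P.
have D2 : modp2 F p %| Sk F k n * x2 by apply/modp_eq0P.
have x11 : x1.[1] = 0.
  have := dvd_eval1 D1; rewrite hornerM Sk_eval => /eqP; rewrite mulf_eq0 (negbTE nF) /=.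
  by move/eqP.
have E1' : red p (x1 - Nk F k * ((p%:R ^+ 2)^-1 *: (PhiA F p * PhiAp F p))) =
  red p (c1 * (('X - 1) ^+ j.+1 + PhiA F p) + c2 * (('X - 1) * PhiAp F p)) := E1.
have E2' : red p (x2 - Nk F k * 0) = red p (c1 * ('X - 1) ^+ j + c2 * PhiAp F p) := E2.
clear E1 E2.
have Msz : size (modp2 F p) = (p ^ 2).+1.
  by rewrite /modp2 -polyC1 size_XnsubC // expn_gt0 prime_gt0.
have small : forall y : {poly F}, reduced p y -> red p (n%:R * y) = 0 -> y = 0.
  move=> y ry; rewrite /red modp_small.
    by rewrite mulr_natl -scaler_nat => /eqP; rewrite scaler_eq0 (negbTE nF) /= => /eqP.
  rewrite mulr_natl -scaler_nat size_scale // Msz; exact: ltnW.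
case: (posnP k) => [k0|kpos].
  move: Hs1 Hs2; rewrite k0 Sk0 => /(small _ r1) -> /(small _ r2) -> //.
exfalso.
have hPA : (PhiA F p).[1] = p%:R := sumX_eval F p (fun i => i).
have hPAp : (PhiAp F p).[1] = p%:R := sumX_eval F p (fun i => p * i)%N.
have hNk : (Nk F k).[1] = k%:R := sumX_eval F k (fun i => i).
have Hc : c1.[1] * p%:R = - k%:R.
  have := dvd_eval1 (red_eq_dvd E1').
  have h1 : (1 : {poly F}).[1] = 1 by rewrite -polyC1 hornerC.
  rewrite !(hornerD, hornerN, hornerM, hornerZ, hornerX, horner_exp, h1) hPA hPAp hNk x11.
  rewrite subrr expr0n /= => /eqP; rewrite mul0r mulr0 !add0r addr0 subr_eq0 => /eqP <-.
  congr (- _); field; exact: p0.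
have c1K : c1.[1] \in KS Hs by rewrite rpred_horner // rpred1.
case pk : (p %| k)%N; last first.
  move/negP: (Knot k (negbT pk)); apply.
  have -> : k%:R / p%:R = - c1.[1] by apply: (mulIf p0); rewrite mulNr Hc divfK // opprK.
  have hh : - c1.[1] \in KS Hs by rewrite rpredN. exact: hh.
set u := (k %/ p)%N.
have ku : k = (p * u)%N by rewrite /u mulnC divnK.
have u0 : (0 < u)%N by move: kpos; rewrite ku muln_gt0 => /andP [].
have up : (u < p)%N by move: kp; rewrite ku -mulnn ltn_pmul2l // prime_gt0.
have pu : ~~ (p %| u)%N by rewrite gtnNdvd.
have Hcu : c1.[1] = - u%:R.
  by apply: (mulIf p0); rewrite Hc ku natrM; ring.
have hj : (j < p)%N.
  by apply: leq_ltn_trans jp _; rewrite ltn_subrL /= prime_gt0.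
have Dx2 : ('X^p - 1) %| x2.
  have h1 : ('X^p - 1) %| Sk F k n * x2 := dvdp_trans (dvd_M F p) D2.
  have h2 : ('X^p - 1) %| (Sk F k n - n%:R) * x2 by rewrite dvdp_mulr // ku Sk_dvd.
  have : ('X^p - 1) %| n%:R * x2.
    have -> : n%:R * x2 = Sk F k n * x2 - (Sk F k n - n%:R) * x2 by ring.
    exact: dvdp_sub.
  by rewrite mulr_natl -scaler_nat dvdpZr.
have Dh : ('X^p - 1) %| c1 * ('X - 1) ^+ j + c2 * p%:R.
  have h3 : ('X^p - 1) %| c1 * ('X - 1) ^+ j + c2 * PhiAp F p.
    have := dvdp_trans (dvd_M F p) (red_eq_dvd E2').
    by rewrite mulr0 subr0 (dvdp_subr _ Dx2).
  have -> : c1 * ('X - 1) ^+ j + c2 * p%:R =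
    (c1 * ('X - 1) ^+ j + c2 * PhiAp F p) - c2 * (PhiAp F p - p%:R) by ring.
  by rewrite dvdp_sub // dvdp_mull // PhiAp_dvd.
set h := c1 * ('X - 1) ^+ j + c2 * p%:R in Dh.
set g := h %/ ('X^p - 1).
have Eh : h = g * ('X^p - 1) by rewrite divpK.
have hK : h \is a polyOver (KS Hs).
  by rewrite rpredD ?rpredM ?rpredX ?rpredB ?polyOverX ?rpred1 ?rpred_nat.
have gK := quot_over (prime_gt0 pr) hK Eh.
have TK : ('X + 1 : {poly F}) \is a polyOver (KS Hs) by rewrite rpredD ?polyOverX ?rpred1.
have rK : rpoly F p \is a polyOver (KS Hs).
  apply/polyOverP => i; rewrite coef_poly; case: ifP => _; [exact: rpred_nat | exact: rpred0].
have C1 : (1 : {poly F}) \Po ('X + 1) = 1 by rewrite -polyC1 comp_polyC.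
have h1 : (1 : {poly F}).[0] = 1 by rewrite -polyC1 hornerC.
have := congr1 (fun f => (f \Po ('X + 1))`_j) Eh.
rewrite /= /h comp_polyD !comp_polyM !(comp_exp, comp_polyB, comp_polyX, C1) addrK comp_nat.
rewrite (X1p F pr) mulrDr !coefD !coefMXn ltnn subnn hj add0r mulr_natr coefMn mulrnAr coefMn.
rewrite -horner_coef0 horner_comp hornerD hornerX h1 add0r Hcu => E.
move/negP: (Knot u pu); apply.
have -> : u%:R / p%:R = ((c2 \Po ('X + 1))`_j - ((g \Po ('X + 1)) * rpoly F p)`_j).
  apply: (mulIf p0); rewrite divfK // mulrBl !mulr_natr.
  move/eqP: E; rewrite -subr_eq0 => /eqP E.
  set a := (c2 \Po ('X + 1))`_j in E *; set b := ((g \Po ('X + 1)) * rpoly F p)`_j in E *.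
  by rewrite -[LHS]addr0 -E; ring.
have hh : (c2 \Po ('X + 1))`_j - ((g \Po ('X + 1)) * rpoly F p)`_j \in KS Hs.
  apply: rpredB.
  by have /polyOverP := polyOver_comp hc2' TK; apply.
  by have /polyOverP := rpredM (polyOver_comp gK TK) rK; apply.
exact: hh.
Qed.

Unset Implicit Arguments. Set Strict Implicit.

Theorem lemma10 (p : nat) (F : fieldType) (K : {pred F}) (j : nat) :
  prime p -> (2 < p)%N ->
  [pchar F] =i pred0 ->
  (is_Zloc p K \/ is_Zp p K) ->
  (1 <= j)%N -> (j <= p - 2)%N ->
  crys_torsion_free p j K.
Proof.
move=> pr _ ch HK _ jp; apply: main_good => //.
by case: HK => HK; [exact: Zloc_good | exact: Zp_good].
Qed.
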